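(* Let $p$ be a prime, $\alpha\ge1$ and $\beta\ge0$. For every $p^\alpha$-periodic function $f:\mathbb{Z}\to\mathbb{Z}$ (equivalently $f:\mathbb{Z}_{p^\alpha}\to\mathbb{Z}$), $$p^\beta\ \text{ divides }\ \Delta^{(\beta(p-1)+1)p^{\alpha-1}}f(x)\quad\text{for all }x.$$
   Context: For a function $f$ on $\mathbb{Z}$ (or on $\mathbb{Z}_q$, viewed as a $q$-periodic function on $\mathbb{Z}$) with values in an additive group, the difference operator is $\Delta f(x):=f(x+1)-f(x)$, and $\Delta^k$ is its $k$-fold iterate. *)

(* Defs.v *)
From mathcomp Require Import all_boot all_order all_algebra.
Set Implicit Arguments. Unset Strict Implicit. Unset Printing Implicit Defensive.
Import Order.TTheory GRing.Theory Num.Theory.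
Local Open Scope ring_scope.

Definition Delta (f : int -> int) : int -> int := fun x => f (x + 1) - f x.

Definition Delta_iter (k : nat) (f : int -> int) : int -> int := iter k Delta f.

(* Main.v *)
Require Import Defs.
From mathcomp Require Import all_boot all_order all_algebra.
From mathcomp Require Import ring lra zify.
Import Order.TTheory GRing.Theory Num.Theory.
Local Open Scope ring_scope.

Definition opP (P : {poly int}) (f : int -> int) (x : int) : int :=
  \sum_(i < size P) P`_i * f (x + i%:Z).

Lemma opP_bound (P : {poly int}) (f : int -> int) (x : int) (n : nat) : (size P <= n)%N ->
  opP P f x = \sum_(i < n) P`_i * f (x + i%:Z).
Proof.
move=> Hn; rewrite /opP (big_ord_widen _ (fun i => P`_i * f (x + i%:Z)) Hn).
rewrite [RHS](bigID (fun i : 'I_n => (i < size P)%N)) /=.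
rewrite [X in _ = _ + X]big1 ?addr0 // => i; rewrite -leqNgt => Hi.
by rewrite nth_default // mul0r.
Qed.

Lemma opP_add (P Q : {poly int}) (f : int -> int) (x : int) : opP (P + Q) f x = opP P f x + opP Q f x.
Proof.
rewrite (@opP_bound _ _ _ _ (leq_maxl (size (P+Q)) (maxn (size P) (size Q)))).
rewrite (@opP_bound P _ _ (maxn (size (P+Q)) (maxn (size P) (size Q)))); last by lia.
rewrite (@opP_bound Q _ _ (maxn (size (P+Q)) (maxn (size P) (size Q)))); last by lia.
by rewrite -big_split /=; apply: eq_bigr => i _; rewrite coefD mulrDl.
Qed.

Lemma opP_C (c : int) (P : {poly int}) (f : int -> int) (x : int) : opP (c%:P * P) f x = c * opP P f x.
Proof.
rewrite (@opP_bound _ _ _ (size P)); last by rewrite mul_polyC size_scale_leq.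
by rewrite /opP mulr_sumr; apply: eq_bigr => i _; rewrite coefCM mulrA.
Qed.

Lemma opP_mulX (P : {poly int}) (f : int -> int) (x : int) : opP (P * 'X) f x = opP P f (x + 1).
Proof.
rewrite (@opP_bound _ _ _ (size P).+1); last first.
  case: (eqVneq P 0) => [->|nz]; first by rewrite mul0r size_poly0.
  by rewrite size_mulX.
rewrite big_ord_recl /= coefMX /= mul0r add0r /opP; apply: eq_bigr => i _.
rewrite coefMX /=; congr (_ * f _); rewrite /bump /= -addrA; congr (_ + _); rewrite add1n; lia.
Qed.

Lemma opP_const (c : int) (f : int -> int) (x : int) : opP c%:P f x = c * f x.
Proof.
rewrite (@opP_bound _ _ _ 1); last by rewrite size_polyC leq_b1.
by rewrite big_ord1 coefC /= addr0.
Qed.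

Lemma opP_mul (P Q : {poly int}) (f : int -> int) (x : int) : opP (P * Q) f x = opP P (opP Q f) x.
Proof.
elim/poly_ind: P x => [|P c IH] x.
  by rewrite mul0r /opP size_poly0 !big_ord0.
rewrite mulrDl -mulrA (mulrC 'X) mulrA opP_add opP_mulX IH opP_add opP_mulX.
by rewrite opP_C opP_const.
Qed.

Lemma opP_delta (g : int -> int) (x : int) : opP ('X - 1) g x = g (x + 1) - g x.
Proof.
rewrite -(mul1r 'X) -polyCN opP_add opP_mulX opP_const.
by rewrite opP_const mul1r mulN1r.
Qed.

Lemma opP_iter (m : nat) (f : int -> int) (x : int) : Delta_iter m f x = opP (('X - 1) ^+ m) f x.
Proof.
elim: m x => [|m IH] x.
  by rewrite expr0 /Delta_iter /= opP_const mul1r.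
rewrite exprS opP_mul opP_delta -!IH.
by [].
Qed.

Lemma opP_Xn (n : nat) (g : int -> int) (x : int) : opP ('X ^+ n) g x = g (x + n%:Z).
Proof.
elim: n x => [|n IH] x; first by rewrite expr0 opP_const mul1r addr0.
by rewrite exprSr opP_mulX IH -addrA intS (addrC 1).
Qed.

Lemma binom_mid (R : comNzRingType) (p : nat) (x y : R) : prime p ->
  exists C, (x + y) ^+ p = x ^+ p + y ^+ p + p%:R * (x * y * C).
Proof.
move=> Hp; have p1 : (1 < p)%N by apply: prime_gt1.
case: p Hp p1 => [|[|n]] Hp p1 //.
exists (\sum_(i < n.+1) x ^+ (n - i) * y ^+ i *+ ('C(n.+2, i.+1) %/ n.+2)).
rewrite exprDn big_ord_recl big_ord_recr /= subn0 bin0 binn subnn !mulr1n expr0 mulr1 mul1r.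
set S := \sum_(i < n.+1) _.
suff -> : S = n.+2%:R * (x * y * \sum_(i < n.+1) x ^+ (n - i) * y ^+ i *+ ('C(n.+2, i.+1) %/ n.+2)).
  ring.
rewrite /S !mulr_sumr; apply: eq_bigr => i _.
rewrite /bump /= add1n.
have Hd : (n.+2 %| 'C(n.+2, i.+1))%N.
  apply: prime_dvd_bin => //; rewrite ltn0Sn /=; case: i => i /= Hi; lia.
rewrite -{1}(divnK Hd) mulrnA mulr_natl; congr (_ *+ _); rewrite mulrnAr; congr (_ *+ _).
have -> : (n.+2 - i.+1 = (n - i).+1)%N by have := ltn_ord i; lia.
by rewrite !exprS; ring.
Qed.


Section Ideal.
Variables (p N : nat).
Hypothesis Hp : prime p.

Definition I (k : nat) (P : {poly int}) :=
  exists Q R : {poly int}, P = (p ^ k)%:R * Q + ('X^N - 1) * R.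

Lemma I_add k P Q : I k P -> I k Q -> I k (P + Q).
Proof.
move=> [Q1 [R1 ->]] [Q2 [R2 ->]]; exists (Q1 + Q2), (R1 + R2); ring.
Qed.

Lemma I_mulr k P S : I k P -> I k (P * S).
Proof. move=> [Q1 [R1 ->]]; exists (Q1 * S), (R1 * S); ring. Qed.

Lemma I_mul a b P Q : I a P -> I b Q -> I (a + b) (P * Q).
Proof.
move=> [Q1 [R1 ->]] [Q2 [R2 ->]].
exists (Q1 * Q2), (R1 * ((p ^ b)%:R * Q2 + ('X^N - 1) * R2) + (p ^ a)%:R * Q1 * R2).
rewrite expnD natrM; ring.
Qed.

Lemma I_muln k P n : I k P -> I k (P *+ n).
Proof. by move=> H; rewrite -mulr_natr; apply: I_mulr. Qed.

Lemma I_p k : I k (p ^ k)%:R.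
Proof. by exists 1, 0; rewrite mulr1 mulr0 addr0. Qed.

Lemma I_M k R : I k (('X^N - 1) * R).
Proof. by exists 0, R; rewrite mulr0 add0r. Qed.

Lemma I_0 P : I 0 P.
Proof. by exists P, 0; rewrite expn0 mul1r mulr0 addr0. Qed.

Lemma I_weak k k' P : (k' <= k)%N -> I k P -> I k' P.
Proof.
move=> Hk [Q [R ->]]; exists ((p ^ (k - k'))%:R * Q), R.
by rewrite mulrA -natrM -expnD subnKC.
Qed.

Lemma I_sum k n (F : 'I_n -> {poly int}) :
  (forall i, I k (F i)) -> I k (\sum_(i < n) F i).
Proof.
move=> H; elim/big_ind: _ => //; first by exists 0, 0; rewrite !mulr0 addr0.
exact: I_add.
Qed.

End Ideal.

Lemma neg1p (p : nat) : prime p -> exists D : {poly int}, (-1) ^+ p = -1 + p%:R * D.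
Proof.
move=> Hp; case: (even_prime Hp) => [->|Ho].
  by exists 1; rewrite expr2 mulN1r opprK mulr1; ring.
by exists 0; rewrite -signr_odd Ho expr1 mulr0 addr0.
Qed.

Lemma stepA (p : nat) (j : nat) : prime p ->
  exists A : {poly int}, ('X - 1) ^+ (p ^ j) = 'X ^+ (p ^ j) - 1 + p%:R * A.
Proof.
move=> Hp; have p1 : (0 < p)%N by apply: prime_gt0.
elim: j => [|j [A IH]].
  by exists 0; rewrite expn0 !expr1 mulr0 addr0.
rewrite expnSr !exprM IH.
rewrite -addrA.
have [C1 ->] := @binom_mid _ p ('X ^+ (p ^ j)) (-1 + p%:R * A) Hp.
have [C2 ->] := @binom_mid _ p (-1 : {poly int}) (p%:R * A) Hp.
have [D ->] := neg1p p Hp.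
rewrite exprMn [(p%:R : {poly int}) ^+ p](_ : _ = p%:R * p%:R ^+ p.-1); last by rewrite -exprS prednK.
exists (D + (p%:R ^+ p.-1 * A ^+ p) + C2 * (-1) * (p%:R * A) + 'X^(p ^ j) * (-1 + p%:R * A) * C1).
ring.
Qed.

Lemma stepB0 (p q : nat) : prime p ->
  exists B : {poly int}, ('X^q - 1) ^+ p = ('X^(q * p) - 1) - p%:R * (('X^q - 1) * B).
Proof.
move=> Hp; have [C HC] := @binom_mid _ p ('X^q - 1 : {poly int}) 1 Hp.
exists C; rewrite exprM; move: HC; rewrite subrK expr1n => ->; ring.
Qed.

Lemma stepB (p q k : nat) : prime p ->
  exists C D : {poly int}, ('X^q - 1) ^+ (1 + k * (p - 1)) =
     (p ^ k)%:R * ('X^q - 1) * C + ('X^(q * p) - 1) * D.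
Proof.
move=> Hp; have p1 : (0 < p)%N by apply: prime_gt0.
have [B HB] := stepB0 p q Hp.
elim: k => [|k [C [D IH]]].
  by exists 1, 0; rewrite mul0n addn0 expr1 expn0 !mulr1 mul1r mulr0 addr0.
rewrite mulSn addnCA exprD IH.
have Hu : ('X^q - 1 : {poly int}) * ('X^q - 1) ^+ (p - 1) = ('X^q - 1) ^+ p.
  by rewrite -exprS subn1 prednK.
exists (- (C * B)), (D * ('X^q - 1) ^+ (p - 1) + (p ^ k)%:R * C).
rewrite expnSr natrM.
transitivity ((p ^ k)%:R * C * (('X^q - 1) * ('X^q - 1) ^+ (p - 1)) +
   ('X^(q * p) - 1) * D * ('X^q - 1) ^+ (p - 1)); first by ring.
rewrite Hu HB; ring.
Qed.

Lemma stepBI (p q k n : nat) : prime p -> (1 + k * (p - 1) <= n)%N ->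
  I p (q * p) k (('X^q - 1) ^+ n).
Proof.
move=> Hp Hn; have [C [D HCD]] := stepB p q k Hp.
rewrite -(subnKC Hn) exprD HCD.
apply: I_mulr; apply: I_add.
  by rewrite -mulrA; apply: I_mulr; apply: I_p.
exact: I_M.
Qed.

Lemma stepC (p q beta : nat) (A : {poly int}) : prime p ->
  I p (q * p) beta ((('X^q - 1) + p%:R * A) ^+ (beta * (p - 1) + 1)).
Proof.
move=> Hp; have p2 : (1 < p)%N by apply: prime_gt1.
rewrite exprDn; apply: I_sum => j; apply: I_muln.
rewrite exprMn -natrX.
case: (leqP beta j) => Hj.
  rewrite mulrC -mulrA; apply: I_weak Hj _; apply: I_mulr; exact: I_p.
apply: (@I_weak _ _ ((beta - j) + j)); first by rewrite subnK // ltnW.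
apply: I_mul.
  apply: stepBI => //.
  have Hj1 : (j <= j * (p - 1))%N by rewrite leq_pmulr // subn_gt0.
  have Hs : ((beta - j) * (p - 1) + j * (p - 1) = beta * (p - 1))%N.
    by rewrite -mulnDl subnK // ltnW.
  have := ltn_ord j; lia.
apply: I_mulr; exact: I_p.
Qed.

Lemma opP_zero (P : {poly int}) (g : int -> int) (x : int) :
  (forall y, g y = 0) -> opP P g x = 0.
Proof. by move=> H; rewrite /opP big1 // => i _; rewrite H mulr0. Qed.

Theorem theorem3p4 (p alpha beta : nat) (f : int -> int) :
  prime p -> (1 <= alpha)%N ->
  (forall x : int, f (x + (p ^ alpha)%:Z) = f x) ->
  forall x : int,
    (((p ^ beta)%:Z) %| Delta_iter ((beta * (p - 1) + 1) * p ^ (alpha - 1))%N f x)%Z.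
Proof.
move=> Hp Ha Hf x.
have HN : (p ^ alpha = p ^ (alpha - 1) * p)%N by rewrite -expnSr subn1 prednK.
have [A HA] := stepA p (alpha - 1) Hp.
have HI := stepC p (p ^ (alpha - 1)) beta A Hp.
rewrite -HN -HA -exprM mulnC in HI.
have [Q [R HQR]] := HI.
rewrite opP_iter HQR opP_add.
have -> : ((p ^ beta)%:R : {poly int}) = ((p ^ beta)%:R : int)%:P by rewrite rmorph_nat.
rewrite opP_C [(_ - 1) * R]mulrC opP_mul (@opP_zero R) ?addr0.
  by rewrite -natz dvdz_mulr.
move=> y; rewrite -polyCN opP_add opP_Xn opP_const HN -HN Hf; ring.
Qed.
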